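(* Let $\ket\psi$ be a pure $n$-qubit state, $t\ge1$, $\bm s\in\{0,1\}^n$. Consider the $t$-copy swap test for $\bm s$: a single ancilla qubit initialized to $\ket0$ and a state register $(\ket\psi\ket\psi)^{\otimes t}$; apply a Hadamard to the ancilla, then the controlled unitary $\ket0\bra0\otimes I+\ket1\bra1\otimes\mathrm{SWAP}_{\bm s}^{\otimes t}$, then a Hadamard to the ancilla, and measure the ancilla, obtaining a bit $x$. Then $x$ is a Bernoulli random variable with $\Pr(x=1)=\frac12(1-P(\bm s)^t)$, and $x$ has the same distribution as $\bm x\cdot\bm s$ with $\bm x\sim p_t$. Consequently, for each $m\ge1$, the estimator $1-\frac2m\sum_{k=1}^m x_k$ built from $m$ i.i.d. swap-test outcomes has the same distribution as $\widehat{P^t}(\bm s)=1-\frac2m\sum_{k=1}^m \bm x_k\cdot\bm s$ built from $m$ i.i.d. samples $\bm x_k\sim p_t$.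
   Context: Subsystems are bitstrings $\bm s\in\{0,1\}^n$ (qubit $j$ included iff $s_j=1$); $\bm x\cdot\bm s\in\{0,1\}$ is the dot product mod 2. $\rho_{\bm s}=\mathrm{Tr}_{\bar{\bm s}}\ket\psi\bra\psi$ and $P(\bm s)=\mathrm{Tr}(\rho_{\bm s}^2)$ (with $P(\bm 0)=1$). $\mathrm{SWAP}_{\bm s}$ swaps the qubits of subsystem $\bm s$ between two copies of the $n$-qubit space. The $t$-copy hidden cut circuit: an $n$-qubit group register is initialized to $\ket{0^n}$ and a state register to $(\ket\psi\ket\psi)^{\otimes t}$; apply $H^{\otimes n}$ to the group register; apply $\sum_{\bm s}\ket{\bm s}\bra{\bm s}\otimes \mathrm{SWAP}_{\bm s}^{\otimes t}$; apply $H^{\otimes n}$ to the group register; measure the group register in the computational basis; $p_t$ denotes the resulting distribution. *)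

(* Defs.v *)
From HB Require Import structures.
From mathcomp Require Import all_boot all_order all_algebra.
Set Implicit Arguments. Unset Strict Implicit. Unset Printing Implicit Defensive.
Import Order.TTheory GRing.Theory Num.Theory.
Local Open Scope ring_scope.

(* bitstrings s in {0,1}^n; bit j set iff qubit j included *)
Definition bits (n : nat) := {ffun 'I_n -> bool}.

Definition zero_bits (n : nat) : bits n := [ffun _ => false].

Definition dotb (n : nat) (x s : bits n) : bool :=
  odd (\sum_(j < n) nat_of_bool (x j && s j))%N.

(* x has support inside s : a basis state of subsystem s *)
Definition supp_in (n : nat) (s x : bits n) : bool := [forall j, x j ==> s j].
Definition bor (n : nat) (x y : bits n) : bits n := [ffun j => x j || y j].
Definition complb (n : nat) (s : bits n) : bits n := [ffun j => ~~ s j].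

(* reduced density matrix rho_s = Tr_{bar s} |psi><psi|, with the
   computational basis of subsystem s indexed by bitstrings supported in s *)
Definition rdm (C : numClosedFieldType) (n : nat) (psi : {ffun bits n -> C})
    (s a a' : bits n) : C :=
  \sum_(c : bits n | supp_in (complb s) c) psi (bor a c) * (psi (bor a' c))^*.

Definition purity (C : numClosedFieldType) (n : nat) (psi : {ffun bits n -> C})
    (s : bits n) : C :=
  \sum_(a : bits n | supp_in s a) \sum_(a' : bits n | supp_in s a')
     rdm psi s a a' * rdm psi s a' a.

Definition normalized (C : numClosedFieldType) (n : nat) (psi : {ffun bits n -> C}) :=
  \sum_(x : bits n) `|psi x| ^+ 2 = 1.

Definition reg (n t : nat) := {ffun 'I_t -> bits n * bits n}.

Definition init_reg (C : numClosedFieldType) (n t : nat) (psi : {ffun bits n -> C})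
    (r : reg n t) : C :=
  \prod_(k < t) (psi (r k).1 * psi (r k).2).

Definition swapS (n : nat) (s : bits n) (p : bits n * bits n) : bits n * bits n :=
  ([ffun j => if s j then p.2 j else p.1 j], [ffun j => if s j then p.1 j else p.2 j]).
Definition swapT (n t : nat) (s : bits n) (r : reg n t) : reg n t :=
  [ffun k => swapS s (r k)].

(* the linear operator |x> |-> |f x>, acting on amplitude vectors *)
Definition perm_op (C : numClosedFieldType) (T : finType) (f : T -> T) (v : T -> C)
    : T -> C := fun y => \sum_(x : T | f x == y) v x.

Definition had1 (C : numClosedFieldType) (b b' : bool) : C :=
  (if b && b' then -1 else 1) / sqrtC 2.

Definition swap_test_final (C : numClosedFieldType) (n t : nat)
    (psi : {ffun bits n -> C}) (s : bits n) : bool * reg n t -> C :=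
  let v0 := fun p : bool * reg n t => if p.1 then 0 else init_reg psi p.2 in
  let v1 := fun p : bool * reg n t => \sum_(b : bool) had1 C p.1 b * v0 (b, p.2) in
  let v2 := fun p : bool * reg n t =>
      if p.1 then perm_op (swapT s) (fun r => v1 (true, r)) p.2 else v1 p in
  fun p => \sum_(b : bool) had1 C p.1 b * v2 (b, p.2).

Arguments swap_test_final {C n} t psi s.

Definition swap_test_prob (C : numClosedFieldType) (n t : nat)
    (psi : {ffun bits n -> C}) (s : bits n) (x : bool) : C :=
  \sum_(r : reg n t) `|swap_test_final t psi s (x, r)| ^+ 2.

Arguments swap_test_prob {C n} t psi s x.

Definition hadn (C : numClosedFieldType) (n : nat) (x y : bits n) : C :=
  (-1) ^+ nat_of_bool (dotb x y) / sqrtC (2 ^+ n).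

Definition hidden_cut_final (C : numClosedFieldType) (n t : nat)
    (psi : {ffun bits n -> C}) : bits n * reg n t -> C :=
  let v0 := fun p : bits n * reg n t =>
      if p.1 == zero_bits n then init_reg psi p.2 else 0 in
  let v1 := fun p : bits n * reg n t => \sum_(y : bits n) hadn C p.1 y * v0 (y, p.2) in
  let v2 := fun p : bits n * reg n t =>
      perm_op (swapT p.1) (fun r => v1 (p.1, r)) p.2 in
  fun p => \sum_(y : bits n) hadn C p.1 y * v2 (y, p.2).

Arguments hidden_cut_final {C n} t psi.

Definition pt (C : numClosedFieldType) (n t : nat) (psi : {ffun bits n -> C})
    (x : bits n) : C :=
  \sum_(r : reg n t) `|hidden_cut_final t psi (x, r)| ^+ 2.

Arguments pt {C n} t psi x.

Definition est (C : numClosedFieldType) (m : nat) (xs : {ffun 'I_m -> bool}) : C :=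
  1 - 2%:R / m%:R * \sum_(k < m) (nat_of_bool (xs k))%:R.

(* Main.v *)
Require Import Defs.
From HB Require Import structures.
From mathcomp Require Import all_boot all_order all_algebra.
From mathcomp Require Import ring.
Import Order.TTheory GRing.Theory Num.Theory.
Local Open Scope ring_scope.
Set Implicit Arguments. Unset Strict Implicit. Unset Printing Implicit Defensive.

Lemma perm_op_inv (C : numClosedFieldType) (T : finType) (f : T -> T) (v : T -> C) y :
  involutive f -> perm_op f v y = v (f y).
Proof.
move=> fK; rewrite /perm_op (big_pred1 (f y)) // => x /=.
apply/eqP/eqP => [<-|->]; by rewrite fK.
Qed.

Lemma swapS_inv n (s : bits n) : involutive (swapS s).
Proof.
case=> x y; rewrite /swapS /=; congr pair; apply/ffunP => j; rewrite !ffunE;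
by case: (s j).
Qed.

Lemma swapT_inv n t (s : bits n) : involutive (@swapT n t s).
Proof. by move=> r; apply/ffunP => k; rewrite !ffunE swapS_inv. Qed.

Lemma swapT_inj n t (s : bits n) : injective (@swapT n t s).
Proof. exact: inv_inj (@swapT_inv n t s). Qed.

Definition bxor n (x y : bits n) : bits n := [ffun j => x j (+) y j].
Definition restr n (s x : bits n) : bits n := [ffun j => s j && x j].

Lemma swapT_comp n t (y s : bits n) (r : reg n t) :
  swapT (bxor y s) (swapT y r) = swapT s r.
Proof.
apply/ffunP => k; rewrite !ffunE /swapS /=; congr pair; apply/ffunP => j;
rewrite /bxor !ffunE; by case: (y j); case: (s j).
Qed.

Lemma bxor_eq0 n (x y : bits n) : (bxor x y == zero_bits n) = (x == y).
Proof.
apply/eqP/eqP => [H|->].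
  apply/ffunP => j; move/ffunP: H => /(_ j); rewrite /bxor !ffunE; by case: (x j); case: (y j).
by apply/ffunP => j; rewrite /bxor !ffunE addbb.
Qed.

Lemma bxorA3 n (y y' s : bits n) : bxor (bxor y y') s = bxor y' (bxor y s).
Proof. by apply/ffunP => j; rewrite /bxor !ffunE; case: (y j); case: (y' j); case: (s j). Qed.

Lemma sum_split (C : numClosedFieldType) n (s : bits n) (F : bits n -> C) :
  \sum_(x : bits n) F x =
  \sum_(a | supp_in s a) \sum_(c | supp_in (complb s) c) F (bor a c).
Proof.
rewrite pair_big_dep /=.
rewrite (reindex (fun x => (restr s x, restr (complb s) x))) /=.
  apply: eq_big => x.
    symmetry; apply/andP; split; apply/forallP => j; rewrite /restr /complb !ffunE;
    by case: (s j); case: (x j).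
  move=> _; congr F; apply/ffunP => j; rewrite /bor /restr /complb !ffunE;
  by case: (s j); case: (x j).
exists (fun p => bor p.1 p.2) => [x _|[a c]].
  apply/ffunP => j; rewrite /bor /restr /complb !ffunE; by case: (s j); case: (x j).
rewrite inE /= => /andP [/forallP Ha /forallP Hc]; congr pair; apply/ffunP => j;
move: (Ha j) (Hc j); rewrite /bor /restr /complb !ffunE;
by case: (s j); case: (a j); case: (c j).
Qed.

Lemma swapS_bor n (s a a' c c' : bits n) :
  supp_in s a -> supp_in s a' -> supp_in (complb s) c -> supp_in (complb s) c' ->
  swapS s (bor a c, bor a' c') = (bor a' c, bor a c').
Proof.
move=> /forallP Ha /forallP Ha' /forallP Hc /forallP Hc'; rewrite /swapS /=.
congr pair; apply/ffunP => j; move: (Ha j) (Ha' j) (Hc j) (Hc' j);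
rewrite /bor /complb !ffunE;
by case: (s j); case: (a j); case: (a' j); case: (c j); case: (c' j).
Qed.

Section Q.
Variable C : numClosedFieldType.
Variables (n t : nat) (psi : {ffun bits n -> C}).

Lemma init_prod_sum (h : bits n * bits n -> bits n * bits n) :
  \sum_(r : reg n t) init_reg psi r * (init_reg psi [ffun k => h (r k)])^* =
  (\sum_(p : bits n * bits n) psi p.1 * psi p.2 * (psi (h p).1 * psi (h p).2)^*) ^+ t.
Proof.
pose f p := psi p.1 * psi p.2 * (psi (h p).1 * psi (h p).2)^*.
transitivity (\sum_(r : reg n t) \prod_(k < t) f (r k)).
  apply: eq_bigr => r _; rewrite /init_reg rmorph_prod -big_split.
  by apply: eq_bigr => k _; rewrite ffunE.
rewrite -(bigA_distr_bigA (fun (_ : 'I_t) p => f p)) /=.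
by rewrite prodr_const card_ord.
Qed.

Lemma init_norm : normalized psi ->
  \sum_(r : reg n t) init_reg psi r * (init_reg psi r)^* = 1.
Proof.
move=> Hn.
have := init_prod_sum (fun p => p) => /=.
under eq_bigr => r _ do rewrite ffunK.
move=> ->.
rewrite -(pair_bigA _ (fun x y => psi x * psi y * (psi x * psi y)^*)) /=.
have -> : \sum_(i : bits n) \sum_(j : bits n) psi i * psi j * (psi i * psi j)^* =
          (\sum_(x : bits n) `|psi x| ^+ 2) ^+ 2.
  rewrite expr2 big_distrlr /=; apply: eq_bigr => x _; apply: eq_bigr => y _.
  by rewrite !normCK rmorphM; ring.
by rewrite Hn !expr1n.
Qed.

Lemma purity_eq (s : bits n) :
  \sum_(p : bits n * bits n) psi p.1 * psi p.2 *
     (psi (swapS s p).1 * psi (swapS s p).2)^* = purity psi s.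
Proof.
rewrite -(pair_bigA _ (fun x y => psi x * psi y * (psi (swapS s (x, y)).1 * psi (swapS s (x,y)).2)^*)) /= (sum_split s) /purity; apply: eq_bigr => a Ha.
under eq_bigr => c Hc do rewrite (sum_split s).
rewrite exchange_big /=; apply: eq_bigr => a' Ha'.
rewrite /rdm big_distrlr /=; apply: eq_bigr => c Hc; apply: eq_bigr => c' Hc'.
have := swapS_bor Ha Ha' Hc Hc'; rewrite /swapS /= => -[-> ->].
by rewrite rmorphM; ring.
Qed.

Lemma G_eq (s : bits n) :
  \sum_(r : reg n t) init_reg psi r * (init_reg psi (swapT s r))^* = purity psi s ^+ t.
Proof. by rewrite -purity_eq -init_prod_sum. Qed.

End Q.

Section ST.
Variable C : numClosedFieldType.
Variables (n t : nat) (psi : {ffun bits n -> C}) (s : bits n).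

Lemma sqrt2 : sqrtC (2 : C) * sqrtC 2 = 2.
Proof. by rewrite -expr2 sqrtCK. Qed.

Lemma sqrt2_neq0 : sqrtC (2 : C) != 0.
Proof. by rewrite sqrtC_eq0 pnatr_eq0. Qed.

Lemma final_swap (a : bool) r :
  swap_test_final t psi s (a, r) =
  (init_reg psi r + (if a then -1 else 1) * init_reg psi (swapT s r)) / 2.
Proof.
rewrite /swap_test_final /= !big_bool /= perm_op_inv; last exact: swapT_inv.
rewrite !big_bool /= /had1 /=.
rewrite andbT andbF !mulr0 !add0r.
have hq := sqrt2_neq0; have e := sqrt2; move: hq e.
set q := sqrtC 2 => hq e; rewrite -e.
by case: a; field.
Qed.

Lemma prob_swap (a : bool) : normalized psi ->
  swap_test_prob t psi s a = (1 + (if a then -1 else 1) * purity psi s ^+ t) / 2.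
Proof.
move=> Hn; rewrite /swap_test_prob.
pose u := fun r : reg n t => init_reg psi r.
pose w := fun r : reg n t => init_reg psi (swapT s r).
have sgc : (if a then -1 else 1 : C)^* = (if a then -1 else 1).
  by case: a; rewrite ?rmorphN1 ?rmorph1.
transitivity (\sum_(r : reg n t) ((u r * (u r)^* + w r * (w r)^*) +
   (if a then -1 else 1) * (u r * (w r)^*) + (if a then -1 else 1) * (w r * (u r)^*)) / 4).
  apply: eq_bigr => r _; rewrite final_swap normCK rmorphM rmorphD rmorphM fmorphV.
  by rewrite /u /w; clear sgc; case: a; rewrite ?rmorphN1 ?rmorph1 ?rmorph_nat; field.
rewrite -mulr_suml !big_split /= -!mulr_sumr.
have Hu : \sum_(r : reg n t) u r * (u r)^* = 1 by exact: init_norm.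
have Hw : \sum_(r : reg n t) w r * (w r)^* = 1.
  rewrite -Hu (reindex_inj (h := swapT s) (P := xpredT)
     (F := fun r => u r * (u r)^*) (@swapT_inj n t s)) //.
have Huw : \sum_(r : reg n t) u r * (w r)^* = purity psi s ^+ t by exact: G_eq.
have Hwu : \sum_(r : reg n t) w r * (u r)^* = purity psi s ^+ t.
  rewrite -Huw (reindex_inj (h := swapT s) (P := xpredT)
     (F := fun r => u r * (w r)^*) (@swapT_inj n t s)) /=.
  by apply: eq_bigr => r _; rewrite /u /w swapT_inv.
by rewrite Hu Hw Huw Hwu; field.
Qed.

End ST.

Section HC.
Variable C : numClosedFieldType.
Variables (n t : nat) (psi : {ffun bits n -> C}).

Lemma sign_dotb (x y : bits n) :
  (-1 : C) ^+ dotb x y = \prod_(j < n) (-1) ^+ (x j && y j).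
Proof. by rewrite /dotb signr_odd expr_sum. Qed.

Lemma char_sum (z : bits n) :
  \sum_(x : bits n) (-1 : C) ^+ dotb x z = if z == zero_bits n then 2 ^+ n else 0.
Proof.
under eq_bigr => x _ do rewrite sign_dotb.
rewrite -(bigA_distr_bigA (fun j b => (-1 : C) ^+ (b && z j))) /=.
under eq_bigr => j _ do rewrite big_bool /=.
case: eqP => [->|/eqP nz].
  under eq_bigr => j _ do rewrite ffunE expr0.
  by rewrite prodr_const card_ord.
have [j zj] : exists j, z j.
  apply/existsP; apply: contraNT nz => /existsPn H.
  by apply/eqP/ffunP => j; rewrite ffunE; apply/negbTE/H.
by rewrite (bigD1 j) //= zj expr1 addNr mul0r.
Qed.

Lemma sign_mul (x y y' : bits n) :
  (-1 : C) ^+ dotb x y * (-1) ^+ dotb x y' = (-1) ^+ dotb x (bxor y y').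
Proof.
rewrite !sign_dotb -big_split; apply: eq_bigr => j _; rewrite /bxor ffunE.
by case: (x j); case: (y j); case: (y' j); rewrite /=; ring.
Qed.

Lemma hcf x r : hidden_cut_final t psi (x, r) =
  (2 ^+ n)^-1 * \sum_(y : bits n) (-1) ^+ dotb x y * init_reg psi (swapT y r).
Proof.
rewrite /hidden_cut_final /=.
rewrite mulr_sumr; apply: eq_bigr => y _; rewrite perm_op_inv; last exact: swapT_inv.
rewrite (bigD1 (zero_bits n)) //= eqxx big1 ?addr0 => [|z /negPf->]; last by rewrite mulr0.
have dz : dotb y (zero_bits n) = false.
  by rewrite /dotb big1 // => j _; rewrite ffunE andbF.
rewrite /hadn dz expr0.
have hq : sqrtC (2 ^+ n : C) != 0 by rewrite sqrtC_eq0 expf_eq0 pnatr_eq0 andbF.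
have e : sqrtC (2 ^+ n : C) * sqrtC (2 ^+ n) = 2 ^+ n by rewrite -expr2 sqrtCK.
move: hq e; set q := sqrtC _ => hq e; rewrite -e.
by field.
Qed.


Definition Fyy (y y' : bits n) : C :=
  \sum_(r : reg n t) init_reg psi (swapT y r) * (init_reg psi (swapT y' r))^*.

Lemma conj_sumE (f : {rmorphism C -> C}) x (r : reg n t) :
  f (\sum_(y : bits n) (-1) ^+ dotb x y * init_reg psi (swapT y r)) =
  \sum_(y : bits n) (-1) ^+ dotb x y * f (init_reg psi (swapT y r)).
Proof. by rewrite rmorph_sum; apply: eq_bigr => y _; rewrite rmorphM rmorphXn rmorphN1. Qed.

Lemma pt_expand x : pt t psi x = (2 ^+ n)^-1 * (2 ^+ n)^-1 *
  \sum_(y : bits n) \sum_(y' : bits n) ((-1) ^+ dotb x y * (-1) ^+ dotb x y') * Fyy y y'.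
Proof.
rewrite /pt.
under eq_bigr => r _ do rewrite normCK hcf rmorphM conj_sumE fmorphV rmorphXn rmorph_nat mulrACA big_distrlr /=.
rewrite -mulr_sumr; congr (_ * _).
rewrite exchange_big; apply: eq_bigr => y _.
rewrite exchange_big; apply: eq_bigr => y' _.
rewrite /Fyy mulr_sumr; apply: eq_bigr => r _; ring.
Qed.

Lemma wchar (s z : bits n) (sg : C) :
  \sum_(x : bits n) (1 + sg * (-1) ^+ dotb x s) / 2 * (-1) ^+ dotb x z =
  2 ^+ n / 2 * ((if z == zero_bits n then 1 else 0) +
                 sg * (if bxor z s == zero_bits n then 1 else 0)).
Proof.
transitivity (\sum_(x : bits n) ((-1) ^+ dotb x z + sg * (-1) ^+ dotb x (bxor z s)) / 2).
  by apply: eq_bigr => x _; rewrite -(sign_mul x z s); field.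
rewrite -mulr_suml big_split /= -mulr_sumr !char_sum.
by case: (z == _); case: (bxor z s == _); field.
Qed.

Lemma sum_two (y z : bits n) (c sg : C) (G : bits n -> C) :
  \sum_(y' : bits n) c * ((if y' == y then 1 else 0) + sg * (if y' == z then 1 else 0)) * G y'
  = c * (G y + sg * G z).
Proof.
transitivity (\sum_(y' : bits n) ((if y' == y then c * G y' else 0) +
                                  (if y' == z then c * sg * G y' else 0))).
  apply: eq_bigr => y' _; case: (y' == y); case: (y' == z); ring.
rewrite big_split /= -!big_mkcond /= !big_pred1_eq; ring.
Qed.

End HC.

Lemma card_bits n : #|{: bits n}| = (2 ^ n)%N.
Proof. by rewrite card_ffun card_bool card_ord. Qed.

Lemma hc_prob (C : numClosedFieldType) n t (psi : {ffun bits n -> C}) (s : bits n) (b : bool) :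
  normalized psi ->
  \sum_(x : bits n | dotb x s == b) pt t psi x =
  (1 + (if b then -1 else 1) * purity psi s ^+ t) / 2.
Proof.
move=> Hn.
set sg : C := if b then -1 else 1.
rewrite big_mkcond /=.
transitivity (\sum_(x : bits n) (1 + sg * (-1) ^+ dotb x s) / 2 * pt t psi x).
  by apply: eq_bigr => x _; rewrite /sg; clear sg; case: (dotb x s); case: b; rewrite /=; field.
under eq_bigr => x _ do rewrite pt_expand mulrCA.
rewrite -mulr_sumr.
transitivity ((2 ^+ n)^-1 * (2 ^+ n)^-1 *
  \sum_(y : bits n) \sum_(y' : bits n)
     (\sum_(x : bits n) (1 + sg * (-1) ^+ dotb x s) / 2 * ((-1) ^+ dotb x y * (-1) ^+ dotb x y'))
     * Fyy t psi y y').
  congr (_ * _).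
  under eq_bigr => x _ do rewrite mulr_sumr.
  rewrite exchange_big; apply: eq_bigr => y _.
  under eq_bigr => x _ do rewrite mulr_sumr.
  rewrite exchange_big; apply: eq_bigr => y' _.
  by rewrite mulr_suml; apply: eq_bigr => x _; ring.
under eq_bigr => y _ do under eq_bigr => y' _ do under eq_bigr => x _ do
  rewrite sign_mul.
under eq_bigr => y _ do under eq_bigr => y' _ do
  rewrite wchar bxorA3 !bxor_eq0 (eq_sym y).
under eq_bigr => y _ do rewrite sum_two.
have HF : forall y : bits n, Fyy t psi y y = 1.
  move=> y; rewrite /Fyy -(init_norm t Hn).
  by rewrite (reindex_inj (h := swapT y) (P := xpredT)
     (F := fun r => init_reg psi r * (init_reg psi r)^*) (@swapT_inj n t y)).
have HG : forall y : bits n, Fyy t psi y (bxor y s) = purity psi s ^+ t.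
  move=> y; rewrite /Fyy -(@G_eq _ _ t psi s).
  rewrite (reindex_inj (h := swapT y) (P := xpredT)
     (F := fun r => init_reg psi r * (init_reg psi (swapT s r))^*) (@swapT_inj n t y)) /=.
  by apply: eq_bigr => r _; rewrite -(swapT_comp y s (swapT y r)) swapT_inv.
under eq_bigr => y _ do rewrite HF HG.
rewrite sumr_const card_bits -(mulr_natr _ (2 ^ n)) natrX.
have h2 : (2 ^+ n : C) != 0 by rewrite expf_eq0 pnatr_eq0 andbF.
by field.
Qed.

Unset Implicit Arguments.

Theorem mainTheorem9 (C : numClosedFieldType) (n t : nat)
    (psi : {ffun bits n -> C}) (s : bits n) :
  normalized psi -> (0 < t)%N ->
  [/\ swap_test_prob t psi s true = (1 - purity psi s ^+ t) / 2,
      swap_test_prob t psi s false = (1 + purity psi s ^+ t) / 2,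
      (forall b : bool,
         swap_test_prob t psi s b = \sum_(x : bits n | dotb x s == b) pt t psi x)
    & forall m : nat, (0 < m)%N -> forall v : C,
        \sum_(xs : {ffun 'I_m -> bool} | est C xs == v)
            \prod_(k < m) swap_test_prob t psi s (xs k)
        = \sum_(X : {ffun 'I_m -> bits n} | est C [ffun k => dotb (X k) s] == v)
            \prod_(k < m) pt t psi (X k)].
Proof.
move=> Hn _.
have Hb : forall b : bool,
    swap_test_prob t psi s b = \sum_(x : bits n | dotb x s == b) pt t psi x.
  by move=> b; rewrite prob_swap // hc_prob.
split => //.
- by rewrite prob_swap // mulN1r.
- by rewrite prob_swap // mul1r.
move=> m _ v.
rewrite (partition_big (fun X : {ffun 'I_m -> bits n} => [ffun k => dotb (X k) s])
           (fun xs => est C xs == v)) //=.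
apply: eq_bigr => xs Hxs.
under eq_bigr => k _ do rewrite Hb.
rewrite bigA_distr_big_dep.
apply: eq_bigl => X.
apply/familyP/andP => [H|[_ /eqP <- k]].
  have E : [ffun k => dotb (X k) s] = xs.
    by apply/ffunP => k; rewrite ffunE; apply/eqP; exact: H.
  by rewrite E.
by rewrite ffunE unfold_in /=.
Qed.
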